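(* Fix $i\in[n]$ such that $m_i=1$. Let $w\in W^i$, $\gamma,\gamma'\in M_i$ with $\gamma'\le\gamma$. Then $w(\gamma')\le w(\gamma)$.
   Context: $\Phi$ is a finite irreducible crystallographic root system with basis $\Pi=\{\alpha_1,\dots,\alpha_n\}$, positive roots $\Phi^+$, highest root $\theta=\sum_i m_i\alpha_i$, Weyl group $W$ with length $\ell$. On the root lattice, $x\le y$ iff $y-x$ is a nonnegative linear combination of positive roots. $M_i=\{\beta\in\Phi^+\mid\beta\ge\alpha_i\}$; $D_r(w)=\{\alpha\in\Pi\mid\ell(ws_\alpha)<\ell(w)\}$; $W^i=\{w\in W\mid D_r(w)\subseteq\{\alpha_i\}\}$. *)

(* Defs.v *)
From HB Require Import structures.
From mathcomp Require Import all_boot all_order all_algebra.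
From mathcomp Require Import reals.
Set Implicit Arguments. Unset Strict Implicit. Unset Printing Implicit Defensive.
Import Order.TTheory GRing.Theory Num.Theory.
Local Open Scope ring_scope.

Section RootSystems.
Variables (R : realType) (n : nat).
Notation V := 'rV[R]_n.

Definition dot (u v : V) : R := \sum_(k < n) u 0 k * v 0 k.

Definition refl (a v : V) : V := v - ((2 * dot v a) / dot a a) *: a.

Definition is_root_system (Phi : seq V) : Prop :=
  [/\ (0 : V) \notin Phi,
      (forall v : V, exists c : 'I_(size Phi) -> R,
          v = \sum_(k < size Phi) c k *: nth 0 Phi k),
      (forall a b, a \in Phi -> b \in Phi -> refl a b \in Phi),
      (forall a b, a \in Phi -> b \in Phi ->
          exists z : int, (2 * dot b a) / dot a a = z%:~R) &
      (forall a (c : R), a \in Phi -> c *: a \in Phi -> c = 1 \/ c = -1)].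

Definition irreducible_rs (Phi : seq V) : Prop :=
  forall P : pred V,
    (forall a b, a \in Phi -> b \in Phi -> P a -> ~~ P b -> dot a b = 0) ->
    (forall a, a \in Phi -> P a) \/ (forall a, a \in Phi -> ~~ P a).

Definition is_base (Phi : seq V) (alpha : 'I_n -> V) : Prop :=
  [/\ (forall j, alpha j \in Phi),
      (forall c : 'I_n -> R, \sum_(j < n) c j *: alpha j = 0 -> forall j, c j = 0) &
      (forall b, b \in Phi -> exists c : 'I_n -> int,
          b = \sum_(j < n) (c j)%:~R *: alpha j /\
          ((forall j, 0 <= c j) \/ (forall j, c j <= 0)))].

Definition pos_root (Phi : seq V) (alpha : 'I_n -> V) (b : V) : Prop :=
  b \in Phi /\ exists c : 'I_n -> int,
    (forall j, 0 <= c j) /\ b = \sum_(j < n) (c j)%:~R *: alpha j.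

Definition rle (Phi : seq V) (alpha : 'I_n -> V) (x y : V) : Prop :=
  exists c : 'I_(size Phi) -> R,
    [/\ (forall k, 0 <= c k),
        (forall k, c k != 0 -> pos_root Phi alpha (nth 0 Phi k)) &
        y - x = \sum_(k < size Phi) c k *: nth 0 Phi k].

Definition in_M (Phi : seq V) (alpha : 'I_n -> V) (i : 'I_n) (b : V) : Prop :=
  pos_root Phi alpha b /\ rle Phi alpha (alpha i) b.

Definition in_Weyl (Phi : seq V) (w : V -> V) : Prop :=
  exists s : seq V, (forall a, a \in s -> a \in Phi) /\
    w =1 foldr (fun a f => fun v => refl a (f v)) id s.

Definition sword (alpha : 'I_n -> V) (s : seq 'I_n) : V -> V :=
  foldr (fun j f => fun v => refl (alpha j) (f v)) id s.

Definition is_length (alpha : 'I_n -> V) (w : V -> V) (k : nat) : Prop :=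
  (exists s, size s = k /\ sword alpha s =1 w) /\
  (forall s, sword alpha s =1 w -> (k <= size s)%N).

Definition in_Dr (alpha : 'I_n -> V) (w : V -> V) (j : 'I_n) : Prop :=
  exists k k', [/\ is_length alpha (fun v => w (refl (alpha j) v)) k',
                   is_length alpha w k & (k' < k)%N].

Definition in_Wi (Phi : seq V) (alpha : 'I_n -> V) (i : 'I_n) (w : V -> V) : Prop :=
  in_Weyl Phi w /\ (forall j, in_Dr alpha w j -> alpha j = alpha i).

End RootSystems.

(* Main.v *)
Require Import Defs.
From HB Require Import structures.
From mathcomp Require Import all_boot all_order all_algebra.
From mathcomp Require Import reals.
From mathcomp Require Import ring lra zify.
From Stdlib Require Import Classical.
Import Order.TTheory GRing.Theory Num.Theory.
Local Open Scope ring_scope.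

Module MA.
Set Implicit Arguments. Unset Strict Implicit. Unset Printing Implicit Defensive.

Section Basic.
Variables (R : realType) (n : nat).
Notation V := 'rV[R]_n.

Lemma dotC (u v : V) : dot u v = dot v u.
Proof. by apply: eq_bigr => k _; rewrite mulrC. Qed.

Lemma dotDl (u v w : V) : dot (u + v) w = dot u w + dot v w.
Proof. by rewrite /dot -big_split; apply: eq_bigr => k _; rewrite !mxE mulrDl. Qed.

Lemma dotZl c (u w : V) : dot (c *: u) w = c * dot u w.
Proof. by rewrite /dot mulr_sumr; apply: eq_bigr => k _; rewrite !mxE mulrA. Qed.

Lemma dotNl (u w : V) : dot (- u) w = - dot u w.
Proof. by rewrite -scaleN1r dotZl mulN1r. Qed.

Lemma dotBl (u v w : V) : dot (u - v) w = dot u w - dot v w.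
Proof. by rewrite dotDl dotNl. Qed.

Lemma dotDr (u v w : V) : dot w (u + v) = dot w u + dot w v.
Proof. by rewrite dotC dotDl !(dotC w). Qed.
Lemma dotZr c (u w : V) : dot w (c *: u) = c * dot w u.
Proof. by rewrite dotC dotZl dotC. Qed.
Lemma dotBr (u v w : V) : dot w (u - v) = dot w u - dot w v.
Proof. by rewrite dotC dotBl !(dotC w). Qed.
Lemma dotNr (u w : V) : dot w (- u) = - dot w u.
Proof. by rewrite dotC dotNl dotC. Qed.

Lemma dot0l (w : V) : dot 0 w = 0.
Proof. by rewrite -(scale0r (0:V)) dotZl mul0r. Qed.

Lemma dot_ge0 (u : V) : 0 <= dot u u.
Proof. by apply: sumr_ge0 => k _; rewrite -expr2 sqr_ge0. Qed.

Lemma dot_eq0 (u : V) : dot u u = 0 -> u = 0.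
Proof.
move=> /eqP; rewrite psumr_eq0 => [/allP H|k _]; last by rewrite -expr2 sqr_ge0.
apply/rowP => k; rewrite mxE; have := H k (mem_index_enum _).
by rewrite -expr2 sqrf_eq0 => /eqP.
Qed.

Lemma dot_gt0 (u : V) : u != 0 -> 0 < dot u u.
Proof. by move=> nz; rewrite lt_def dot_ge0 andbT; apply/eqP => /dot_eq0 /eqP; rewrite (negbTE nz). Qed.

Definition lin (f : V -> V) := forall c u v, f (c *: u + v) = c *: f u + f v.

Lemma lin0 f : lin f -> f 0 = 0.
Proof.
move=> H; have := H 1 0 0; rewrite !scale1r addr0.
by move=> /(congr1 (fun x => x - f 0)); rewrite addrK subrr => H0; rewrite -H0.
Qed.
Lemma linD f u v : lin f -> f (u + v) = f u + f v.
Proof. by move=> H; have := H 1 u v; rewrite !scale1r. Qed.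
Lemma linZ f c u : lin f -> f (c *: u) = c *: f u.
Proof. by move=> H; rewrite -(addr0 (c *: u)) H lin0 // addr0. Qed.
Lemma linN f u : lin f -> f (- u) = - f u.
Proof. by move=> H; rewrite -scaleN1r linZ // scaleN1r. Qed.
Lemma linB f u v : lin f -> f (u - v) = f u - f v.
Proof. by move=> H; rewrite linD // linN. Qed.
Lemma lin_sum f m (d : 'I_m -> R) (v : 'I_m -> V) : lin f ->
  f (\sum_(j < m) d j *: v j) = \sum_(j < m) d j *: f (v j).
Proof.
move=> H; elim: m d v => [|m IH] d v; first by rewrite !big_ord0 lin0.
by rewrite !big_ord_recr /= linD // IH linZ.
Qed.

Lemma refl_lin (a : V) : lin (refl a).
Proof.
move=> c u v; rewrite /refl dotDl dotZl.
have -> : 2 * (c * dot u a + dot v a) / dot a a = c * (2 * dot u a / dot a a) + 2 * dot v a / dot a a by ring.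
by rewrite scalerDl scalerBr scalerA addrACA opprD.
Qed.

Lemma refl_dot (a u v : V) : a != 0 -> dot (refl a u) (refl a v) = dot u v.
Proof.
move=> nz; have aa := dot_gt0 nz.
rewrite /refl !(dotBl, dotBr, dotZl, dotZr) ?(dotC a u) ?(dotC a v).
field; exact: lt0r_neq0.
Qed.

Lemma refl_inv (a v : V) : a != 0 -> refl a (refl a v) = v.
Proof.
move=> nz; have aa := lt0r_neq0 (dot_gt0 nz).
rewrite {1}/refl.
have -> : (2 * (dot (refl a v) a)) / dot a a = - (2 * dot v a / dot a a).
  rewrite /refl dotBl dotZl; field => //.
by rewrite scaleNr opprK /refl subrK.
Qed.

Lemma refl_self (a : V) : a != 0 -> refl a a = - a.
Proof.
move=> nz; have aa := lt0r_neq0 (dot_gt0 nz).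
rewrite /refl.
have -> : 2 * dot a a / dot a a = 2 by field.
by rewrite scaler_nat mulr2n opprD addNKr.
Qed.

Lemma refl_opp (a v : V) : refl (- a) v = refl a v.
Proof. by rewrite /refl dotNr dotNl dotNr opprK mulrN mulNr scalerN scaleNr opprK. Qed.

Definition orth (u : V -> V) := lin u /\ forall x y, dot (u x) (u y) = dot x y.

Lemma conj_refl u (a v : V) : orth u -> u (refl a v) = refl (u a) (u v).
Proof. by case=> L D; rewrite /refl linB // linZ // !D. Qed.

End Basic.

End MA.
Import MA.

Module MB.
Set Implicit Arguments. Unset Strict Implicit. Unset Printing Implicit Defensive.

Section RS.
Variables (R : realType) (n : nat) (Phi : seq 'rV[R]_n) (alpha : 'I_n -> 'rV[R]_n).
Notation V := 'rV[R]_n.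
Hypothesis HR : is_root_system Phi.
Hypothesis HB : is_base Phi alpha.

Lemma nz_Phi b : b \in Phi -> b != 0.
Proof. by case: HR => H0 _ _ _ _ Hb; apply/eqP => E; rewrite -E Hb in H0. Qed.

Lemma refl_Phi a b : a \in Phi -> b \in Phi -> refl a b \in Phi.
Proof. by case: HR => _ _ H _ _; apply: H. Qed.

Lemma refl_int a b : a \in Phi -> b \in Phi -> exists z : int, refl a b = b - z%:~R *: a.
Proof. by case: HR => _ _ _ H _ Ha Hb; have [z Hz] := H a b Ha Hb; exists z; rewrite /refl Hz. Qed.

Lemma alpha_Phi j : alpha j \in Phi.
Proof. by case: HB. Qed.

Lemma alpha_nz j : alpha j != 0.
Proof. exact: nz_Phi (alpha_Phi j). Qed.

Lemma coord_uniq (a b : 'I_n -> R) :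
  \sum_(j < n) a j *: alpha j = \sum_(j < n) b j *: alpha j -> forall j, a j = b j.
Proof.
case: HB => _ Hi _ E j; apply/eqP; rewrite -subr_eq0; apply/eqP.
apply: (Hi (fun k => a k - b k)).
rewrite (eq_bigr (fun k => a k *: alpha k - b k *: alpha k)) => [|k _]; last by rewrite scalerBl.
by rewrite sumrB E subrr.
Qed.

Lemma sum_pick (f : 'I_n -> R) j : (forall k, k != j -> f k = 0) ->
  \sum_(k < n) f k *: alpha k = f j *: alpha j.
Proof.
move=> H; rewrite (bigD1 j) //= big1 ?addr0 // => k /H ->; exact: scale0r.
Qed.

Lemma alpha_inj j k : alpha j = alpha k -> j = k.
Proof.
move=> E; apply/eqP; apply/negPn/negP => ne.
have := @coord_uniq (fun l => (l == j)%:R) (fun l => (l == k)%:R).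
rewrite (@sum_pick _ j) ?(@sum_pick _ k); last first.
- by move=> l /negbTE ->.
- by move=> l /negbTE ->.
rewrite !eqxx !scale1r => /(_ E j).
by rewrite eqxx (negbTE ne) => /eqP; rewrite oner_eq0.
Qed.

Definition posr b := pos_root Phi alpha b.
Definition negr b := b \in Phi /\ exists c : 'I_n -> int,
    (forall j, c j <= 0) /\ b = \sum_(j < n) (c j)%:~R *: alpha j.

Lemma pos_or_neg b : b \in Phi -> posr b \/ negr b.
Proof.
case: HB => _ _ H Hb; have [c [E [P|N]]] := H b Hb.
- by left; split => //; exists c.
- by right; split => //; exists c.
Qed.

Lemma not_pos_neg b : posr b -> negr b -> False.
Proof.
move=> [Hb [c [Pc Ec]]] [_ [d [Nd Ed]]].
have H := coord_uniq (etrans (esym Ec) Ed).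
have c0 : forall j, c j = 0.
  move=> j; have /intr_inj Ej := H j.
  by apply/eqP; rewrite eq_le Pc andbT Ej Nd.
have : b = 0 by rewrite Ec big1 // => j _; rewrite c0 scale0r.
by move=> b0; move: (nz_Phi Hb); rewrite b0 eqxx.
Qed.

Lemma alpha_pos j : posr (alpha j).
Proof.
split; first exact: alpha_Phi.
exists (fun k => (k == j)%:Z); split => [k|]; first by case: (k == j).
rewrite (@sum_pick _ j) ?eqxx ?scale1r // => k /negbTE ->; by [].
Qed.

Lemma refl_simple_pos b j : posr b -> b != alpha j -> posr (refl (alpha j) b).
Proof.
move=> [Hb [c [Pc Ec]]] ne.
have Hr := refl_Phi (alpha_Phi j) Hb.
have [z Ez] := refl_int (alpha_Phi j) Hb.
case: HB => _ _ H; have [e [Ee [Pe|Ne]]] := H _ Hr.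
  by split => //; exists e.
exfalso.
have E2 : refl (alpha j) b = \sum_(k < n) ((c k)%:~R - (z * (k == j)%:Z)%:~R) *: alpha k.
  rewrite Ez Ec.
  rewrite [RHS](eq_bigr (fun k => (c k)%:~R *: alpha k - (z * (k == j)%:Z)%:~R *: alpha k)) => [|k _]; last by rewrite scalerBl.
  rewrite sumrB; congr (_ - _).
  by rewrite (@sum_pick _ j) ?eqxx ?mulr1 // => k /negbTE ->; rewrite mulr0.
have U := coord_uniq (etrans (esym Ee) E2).
have ck0 : forall k, k != j -> c k = 0.
  move=> k /negbTE kj; have := U k; rewrite kj mulr0 subr0 => /intr_inj Ek.
  by apply/eqP; rewrite eq_le Pc andbT -Ek Ne.
have Eb : b = (c j)%:~R *: alpha j.
  by rewrite Ec (@sum_pick _ j) // => k /ck0 ->.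
case: HR => _ _ _ _ Hred.
have := Hred (alpha j) (c j)%:~R (alpha_Phi j); rewrite -Eb => /(_ Hb) [] Hc.
  by move: ne; rewrite Eb Hc scale1r eqxx.
have : 0 <= ((c j)%:~R : R) by rewrite ler0z.
by rewrite Hc; lra.
Qed.

End RS.

End MB.
Import MB.

Module MC.
Set Implicit Arguments. Unset Strict Implicit. Unset Printing Implicit Defensive.

Section Words.
Variables (R : realType) (n : nat) (Phi : seq 'rV[R]_n) (alpha : 'I_n -> 'rV[R]_n).
Notation V := 'rV[R]_n.
Hypothesis HR : is_root_system Phi.
Hypothesis HB : is_base Phi alpha.

Lemma sword_cons j s v : sword alpha (j :: s) v = refl (alpha j) (sword alpha s v).
Proof. by []. Qed.

Lemma sword_cat s1 s2 v : sword alpha (s1 ++ s2) v = sword alpha s1 (sword alpha s2 v).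
Proof. by elim: s1 => [//|j s1 IH]; rewrite cat_cons !sword_cons IH. Qed.

Lemma orth_refl (a : V) : a != 0 -> orth (refl a).
Proof. by move=> nz; split; [exact: refl_lin | move=> x y; exact: refl_dot]. Qed.

Lemma orth_comp (f g : V -> V) : orth f -> orth g -> orth (fun v => f (g v)).
Proof.
move=> [Lf Df] [Lg Dg]; split.
  by move=> c u v; rewrite Lg Lf.
by move=> x y; rewrite Df Dg.
Qed.

Lemma sword_orth s : orth (sword alpha s).
Proof.
elim: s => [|j s IH]; first by split => //.
exact: (orth_comp (orth_refl (alpha_nz HR HB j)) IH).
Qed.

Lemma sword_Phi s b : b \in Phi -> sword alpha s b \in Phi.
Proof.
elim: s => [//|j s IH] Hb; rewrite sword_cons.
by apply: (refl_Phi HR) => //; [apply: alpha_Phi | apply: IH].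
Qed.

Lemma dot_suml m (d : 'I_m -> R) (v : 'I_m -> V) w :
  dot (\sum_(k < m) d k *: v k) w = \sum_(k < m) d k * dot (v k) w.
Proof.
elim: m d v => [|m IH] d v; first by rewrite !big_ord0 dot0l.
by rewrite !big_ord_recr /= dotDl IH dotZl.
Qed.

Lemma refl_coords j b (c : 'I_n -> int) (z : int) :
  b = \sum_(k < n) (c k)%:~R *: alpha k ->
  b - z%:~R *: alpha j = \sum_(k < n) (c k - z * (k == j)%:Z)%:~R *: alpha k.
Proof.
move=> Ec; rewrite Ec.
rewrite [RHS](eq_bigr (fun k => (c k)%:~R *: alpha k - (z * (k == j)%:Z)%:~R *: alpha k)) => [|k _]; last by rewrite intrB scalerBl.
rewrite sumrB; congr (_ - _).
by rewrite (@sum_pick _ _ alpha _ j) ?eqxx ?mulr1 // => k /negbTE ->; rewrite mulr0.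
Qed.

Lemma refl_descent b (c : 'I_n -> int) :
  b \in Phi -> (forall k, 0 <= c k) -> b = \sum_(k < n) (c k)%:~R *: alpha k ->
  (exists j, b = alpha j) \/
  (exists j (e : 'I_n -> int), [/\ (forall k, 0 <= e k),
      refl (alpha j) b = \sum_(k < n) (e k)%:~R *: alpha k,
      \sum_(k < n) e k <= \sum_(k < n) c k - 1 &
      refl (alpha j) b \in Phi]).
Proof.
move=> Hb Pc Ec.
have bb := dot_gt0 (nz_Phi HR Hb).
case: (boolP [exists j, 0 < dot b (alpha j)]); last first.
  rewrite negb_exists => /forallP H; exfalso.
  have : dot b b <= 0.
    rewrite {2}Ec dotC dot_suml.
    apply: sumr_le0 => k _.
    apply: mulr_ge0_le0; first by rewrite ler0z.
    by rewrite dotC leNgt H.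
  by lra.
move=> /existsP [j Hj].
case: (eqVneq b (alpha j)) => [->|ne]; first by left; exists j.
right.
have Pb : posr Phi alpha b by split => //; exists c.
have [_ [e [Pe Ee]]] := refl_simple_pos HR HB Pb ne.
case: HR => _ _ _ Hint _.
have [z Hz] := Hint (alpha j) b (alpha_Phi HB j) Hb.
have z0 : 0 < z.
  rewrite -(ltr0z R) -Hz; apply: divr_gt0; last exact: dot_gt0 (alpha_nz HR HB j).
  by rewrite mulr_gt0.
have E2 := refl_coords j z Ec.
have Er : refl (alpha j) b = b - z%:~R *: alpha j by rewrite /refl Hz.
rewrite Er E2 in Ee.
have U := coord_uniq HB (esym Ee).
have Ek : forall k, e k = c k - z * (k == j)%:Z by move=> k; apply/eqP; rewrite -(eqr_int R) U.
exists j, e; split => //; first by rewrite Er E2 -Ee.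
  rewrite (eq_bigr _ (fun k _ => Ek k)) sumrB.
  have -> : \sum_(k < n) z * (k == j)%:Z = z.
    rewrite (bigD1 j) //= big1 ?eqxx ?mulr1 ?addr0 // => k /negbTE ->; by rewrite mulr0.
  by rewrite lerD2l lerN2 -gtz0_ge1.
by apply: (refl_Phi HR) => //; apply: alpha_Phi.
Qed.

End Words.

End MC.
Import MC.

Module MD.
Set Implicit Arguments. Unset Strict Implicit. Unset Printing Implicit Defensive.

Section Words2.
Variables (R : realType) (n : nat) (Phi : seq 'rV[R]_n) (alpha : 'I_n -> 'rV[R]_n).
Notation V := 'rV[R]_n.
Hypothesis HR : is_root_system Phi.
Hypothesis HB : is_base Phi alpha.

Lemma refl_word_pos (N : nat) : forall b (c : 'I_n -> int),
  b \in Phi -> (forall k, 0 <= c k) -> b = \sum_(k < n) (c k)%:~R *: alpha k ->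
  \sum_(k < n) c k <= N%:Z -> exists s, sword alpha s =1 refl b.
Proof.
elim: N => [|N IH] b c Hb Pc Ec HN;
  case: (refl_descent HR HB Hb Pc Ec) => [[j ->]|[j [e [Pe Ee He Hr]]]].
- by exists [:: j].
- have : 0 <= \sum_(k < n) e k by apply: sumr_ge0 => k _; exact: Pe.
  lia.
- by exists [:: j].
- have [s Hs] := IH _ e Hr Pe Ee (ltac:(lia)).
  exists (j :: s ++ [:: j]) => v.
  rewrite sword_cons sword_cat Hs /=.
  have O := orth_refl (alpha_nz HR HB j).
  have nz := alpha_nz HR HB j; by rewrite (conj_refl _ _ O) !refl_inv.
Qed.

Lemma refl_word b : b \in Phi -> exists s, sword alpha s =1 refl b.
Proof.
move=> Hb; case: (pos_or_neg HB Hb) => [[_ [c [Pc Ec]]]|[_ [c [Nc Ec]]]].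
  apply: (@refl_word_pos (absz (\sum_(k < n) c k)) b c) => //; rewrite abszE; exact: ler_norm.
have Hb' : - b \in Phi.
  by rewrite -refl_self ?(nz_Phi HR) //; apply: (refl_Phi HR).
have Ec' : - b = \sum_(k < n) (- c k)%:~R *: alpha k.
  by rewrite Ec -sumrN; apply: eq_bigr => k _; rewrite intrN scaleNr.
have Pc' : forall k, 0 <= - c k by move=> k; have := Nc k; lia.
have [s Hs] := @refl_word_pos (absz (\sum_(k < n) - c k)) _ _ Hb' Pc' Ec' ltac:(rewrite abszE; exact: ler_norm).
by exists s => v; rewrite Hs refl_opp.
Qed.

Lemma weyl_word w : in_Weyl Phi w -> exists s, sword alpha s =1 w.
Proof.
move=> [sl [Hs Ew]].
suff [s Hs'] : exists s, sword alpha s =1 foldr (fun a f => fun v => refl a (f v)) id sl.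
  by exists s => v; rewrite Hs' Ew.
elim: sl Hs {Ew} => [|a sl IH] Hs; first by exists [::].
have [s0 H0] := IH (fun b Hb => Hs b (mem_behead (s:=a :: sl) Hb)).
have [sa Ha] := refl_word (Hs a (mem_head _ _)).
by exists (sa ++ s0) => v; rewrite sword_cat H0 Ha.
Qed.

Lemma length_exists (N : nat) (f : V -> V) :
  (exists s, (size s <= N)%N /\ sword alpha s =1 f) -> exists k, is_length alpha f k.
Proof.
elim: N => [|N IH] [s [Hs Ef]].
  exists 0%N; split; last by move=> ? ?.
  by exists s; split => //; apply/eqP; rewrite -leqn0.
case: (classic (exists s', (size s' <= N)%N /\ sword alpha s' =1 f)) => [H|H].
  exact: IH.
exists (size s); split; first by exists s.
move=> s' Hs'; rewrite leqNgt; apply/negP => lt.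
by apply: H; exists s'; split => //; lia.
Qed.

Lemma exchange j s : negr Phi alpha (sword alpha s (alpha j)) ->
  exists s', (size s' < size s)%N /\
    sword alpha s' =1 (fun v => sword alpha s (refl (alpha j) v)).
Proof.
elim: s => [|t s0 IH] Hneg.
  by case: (not_pos_neg HR HB (alpha_pos HB j) Hneg).
have Hu : sword alpha s0 (alpha j) \in Phi by apply: (sword_Phi HR HB); exact: (alpha_Phi HB j).
case: (pos_or_neg HB Hu) => [Hp|Hn].
  case: (eqVneq (sword alpha s0 (alpha j)) (alpha t)) => [Eu|ne].
    exists s0; split => // v.
    have nz := alpha_nz HR HB t.
    by rewrite sword_cons (conj_refl _ _ (sword_orth HR HB s0)) Eu refl_inv.
  by case: (not_pos_neg HR HB (refl_simple_pos HR HB Hp ne) Hneg).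
have [s' [Hsz Hs']] := IH Hn.
by exists (t :: s'); split => // v; rewrite !sword_cons Hs'.
Qed.

Lemma w_pos i w j : in_Wi Phi alpha i w -> j != i -> posr Phi alpha (w (alpha j)).
Proof.
move=> [Hw HD] ne.
have [s0 H0] := weyl_word Hw.
have Hwj : w (alpha j) \in Phi by rewrite -H0; apply: (sword_Phi HR HB); exact: (alpha_Phi HB j).
case: (pos_or_neg HB Hwj) => // Hn; exfalso.
have [k [[s1 [sz1 Hs1]] Hmin]] := @length_exists (size s0) w (ex_intro _ s0 (conj (leqnn _) H0)).
have Hn' : negr Phi alpha (sword alpha s1 (alpha j)) by rewrite Hs1.
have [s' [Hsz Hs']] := exchange Hn'.
have [k' Hk'] := @length_exists (size s') (fun v => w (refl (alpha j) v))
   (ex_intro _ s' (conj (leqnn _) (fun v => etrans (Hs' v) (Hs1 _)))).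
have Hks : (k' <= size s')%N.
  by case: Hk' => _ Hm; apply: Hm => v; rewrite Hs' Hs1.
have : in_Dr alpha w j.
  exists k, k'; split => //; first by split => //; exists s1.
  by rewrite -sz1; apply: leq_ltn_trans Hsz.
by move/HD/(alpha_inj HB)/eqP; rewrite (negbTE ne).
Qed.

End Words2.

End MD.
Import MD.

Module ME.
Set Implicit Arguments. Unset Strict Implicit. Unset Printing Implicit Defensive.

Section Cone.
Variables (R : realType) (n : nat) (Phi : seq 'rV[R]_n) (alpha : 'I_n -> 'rV[R]_n).
Notation V := 'rV[R]_n.
Hypothesis HR : is_root_system Phi.
Hypothesis HB : is_base Phi alpha.

Definition SC (x : V) := exists d : 'I_n -> R, (forall j, 0 <= d j) /\ x = \sum_(j < n) d j *: alpha j.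
Definition PC (x : V) := exists c : 'I_(size Phi) -> R,
    [/\ (forall k, 0 <= c k),
        (forall k, c k != 0 -> posr Phi alpha (nth 0 Phi k)) &
        x = \sum_(k < size Phi) c k *: nth 0 Phi k].

Lemma SC0 : SC 0.
Proof. by exists (fun _ => 0); split => // ; rewrite big1 // => j _; rewrite scale0r. Qed.

Lemma SCD x y : SC x -> SC y -> SC (x + y).
Proof.
move=> [d [Pd ->]] [e [Pe ->]]; exists (fun j => d j + e j); split.
  by move=> j; rewrite addr_ge0.
by rewrite -big_split; apply: eq_bigr => j _; rewrite scalerDl.
Qed.

Lemma SCZ c x : 0 <= c -> SC x -> SC (c *: x).
Proof.
move=> Pc [d [Pd ->]]; exists (fun j => c * d j); split.
  by move=> j; rewrite mulr_ge0.
by rewrite scaler_sumr; apply: eq_bigr => j _; rewrite scalerA.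
Qed.

Lemma SC_pos b : posr Phi alpha b -> SC b.
Proof.
move=> [_ [c [Pc ->]]]; exists (fun j => (c j)%:~R); split => // j.
by rewrite ler0z.
Qed.

Lemma SC_sum m (c : 'I_m -> R) (v : 'I_m -> V) :
  (forall k, 0 <= c k) -> (forall k, c k != 0 -> SC (v k)) -> SC (\sum_(k < m) c k *: v k).
Proof.
elim: m c v => [|m IH] c v Pc Hv; first by rewrite big_ord0; exact: SC0.
rewrite big_ord_recr /=; apply: SCD.
  by apply: IH => // k; apply: Hv.
case: (eqVneq (c ord_max) 0) => [->|nz]; first by rewrite scale0r; exact: SC0.
by apply: SCZ => //; apply: Hv.
Qed.

Lemma PC0 : PC 0.
Proof. exists (fun _ => 0); split => // [k|]; first by rewrite eqxx. by rewrite big1 // => j _; rewrite scale0r. Qed.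

Lemma PCD x y : PC x -> PC y -> PC (x + y).
Proof.
move=> [d [Pd Hd ->]] [e [Pe He ->]]; exists (fun j => d j + e j); split.
- by move=> j; rewrite addr_ge0.
- move=> k; case: (eqVneq (d k) 0) => [E|]; last by move=> /Hd.
  by rewrite E add0r => /He.
- by rewrite -big_split; apply: eq_bigr => j _; rewrite scalerDl.
Qed.

Lemma PCZ c x : 0 <= c -> PC x -> PC (c *: x).
Proof.
move=> Pc [d [Pd Hd ->]]; exists (fun j => c * d j); split.
- by move=> j; rewrite mulr_ge0.
- by move=> k; rewrite mulf_eq0 negb_or => /andP [_ /Hd].
- by rewrite scaler_sumr; apply: eq_bigr => j _; rewrite scalerA.
Qed.

Lemma PC_pos b : posr Phi alpha b -> PC b.
Proof.
move=> Pb; have Hb : b \in Phi by case: Pb.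
have lt : (index b Phi < size Phi)%N by rewrite index_mem.
pose k0 := Ordinal lt.
exists (fun k => (k == k0)%:R); split.
- by move=> k; case: (k == k0).
- move=> k; case: (eqVneq k k0) => [->|]; last by rewrite eqxx.
  by rewrite /= nth_index.
- rewrite (bigD1 k0) //= big1 ?addr0 ?eqxx ?scale1r ?nth_index //.
  by move=> k /negbTE ->; rewrite scale0r.
Qed.

Lemma PC_sum m (c : 'I_m -> R) (v : 'I_m -> V) :
  (forall k, 0 <= c k) -> (forall k, c k != 0 -> PC (v k)) -> PC (\sum_(k < m) c k *: v k).
Proof.
elim: m c v => [|m IH] c v Pc Hv; first by rewrite big_ord0; exact: PC0.
rewrite big_ord_recr /=; apply: PCD.
  by apply: IH => // k; apply: Hv.
case: (eqVneq (c ord_max) 0) => [->|nz]; first by rewrite scale0r; exact: PC0.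
by apply: PCZ => //; apply: Hv.
Qed.

Lemma rle_SC x y : rle Phi alpha x y -> SC (y - x).
Proof.
move=> [c [Pc Hc ->]]; apply: SC_sum => // k /Hc; exact: SC_pos.
Qed.


Lemma coeff_diff x y (a b : 'I_n -> R) :
  x = \sum_(j < n) a j *: alpha j -> y = \sum_(j < n) b j *: alpha j ->
  y - x = \sum_(j < n) (b j - a j) *: alpha j.
Proof.
move=> -> ->; rewrite -sumrB; apply: eq_bigr => j _; by rewrite scalerBl.
Qed.

Lemma coeff_SC x y (a b : 'I_n -> R) :
  x = \sum_(j < n) a j *: alpha j -> y = \sum_(j < n) b j *: alpha j ->
  SC (y - x) -> exists d : 'I_n -> R, (forall j, 0 <= d j) /\
     (forall j, b j - a j = d j) /\ y - x = \sum_(j < n) d j *: alpha j.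
Proof.
move=> Ex Ey [d [Pd Ed]]; exists d; split => //; split => //.
by apply: (coord_uniq HB); rewrite -Ed (coeff_diff Ex Ey).
Qed.

Lemma Mi_coeff i (theta gamma : V) (m : 'I_n -> R) :
  (forall b, b \in Phi -> rle Phi alpha b theta) ->
  theta = \sum_(j < n) m j *: alpha j -> m i = 1 ->
  in_M Phi alpha i gamma ->
  exists g : 'I_n -> R, gamma = \sum_(j < n) g j *: alpha j /\ g i = 1.
Proof.
move=> Hth Et mi [Pg Hg].
have Hgam : gamma \in Phi by case: Pg.
case: (Pg) => _ [gi [_ Eg]].
exists (fun j => (gi j)%:~R); split => //.
have Ea : alpha i = \sum_(j < n) (j == i)%:R *: alpha j.
  by rewrite (sum_pick alpha (j:=i)) ?eqxx ?scale1r // => k /negbTE ->.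
have [d1 [P1 [E1 _]]] := coeff_SC Ea Eg (rle_SC Hg).
have [d2 [P2 [E2 _]]] := coeff_SC Eg Et (rle_SC (Hth _ Hgam)).
have := E1 i; have := E2 i; have := P1 i; have := P2 i.
rewrite eqxx mi [true%:R]/= ; lra.
Qed.

End Cone.

End ME.
Import ME.

Theorem proposition5p5 (R : realType) (n : nat) (Phi : seq 'rV[R]_n)
    (alpha : 'I_n -> 'rV[R]_n) (theta : 'rV[R]_n) (m : 'I_n -> R) (i : 'I_n)
    (w : 'rV[R]_n -> 'rV[R]_n) (gamma gamma' : 'rV[R]_n) :
  is_root_system Phi -> irreducible_rs Phi -> is_base Phi alpha ->
  theta \in Phi -> (forall b, b \in Phi -> rle Phi alpha b theta) ->
  theta = \sum_(j < n) m j *: alpha j ->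
  m i = 1 ->
  in_Wi Phi alpha i w ->
  in_M Phi alpha i gamma -> in_M Phi alpha i gamma' ->
  rle Phi alpha gamma' gamma ->
  rle Phi alpha (w gamma') (w gamma).
Proof.
move=> HR _ HB _ Hth Et mi Hwi Hg Hg' Hle.
have [s0 H0] := weyl_word HR HB (proj1 Hwi).
have [g [Eg gi]] := Mi_coeff HB Hth Et mi Hg.
have [g' [Eg' gi']] := Mi_coeff HB Hth Et mi Hg'.
have [d [Pd [Ed E]]] := coeff_SC HB Eg' Eg (rle_SC Hle).
have di : d i = 0 by rewrite -Ed gi gi' subrr.
change (PC Phi alpha (w gamma - w gamma')).
have L := proj1 (sword_orth HR HB s0).
rewrite -!H0 -linB // E lin_sum //.
apply: PC_sum => // j dj.
have ne : j != i by apply/eqP => ji; move: dj; rewrite ji di eqxx.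
rewrite H0; exact: (PC_pos (w_pos HR HB Hwi ne)).
Qed.
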